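(* Let $G=\langle c,s\rangle$ and $\phi:H\to G$ be as in the context. Let $w=s^{\alpha_0}c^{\beta_1}s^{\alpha_1}c^{\beta_2}\cdots s^{\alpha_{n-1}}c^{\beta_n}s^{\alpha_n}$, where $n\ge1$, $\alpha_0,\ldots,\alpha_n,\beta_1,\ldots,\beta_n$ are integers, all nonzero except possibly $\alpha_0$ and $\alpha_n$. Put $\gamma_j=\sum_{i=0}^{j-1}\alpha_i$ for $j=1,\ldots,n$ and $B_i=\{j\in\{1,\ldots,n\}:\gamma_j=\gamma_i\}$. If $w$, regarded as an element of $G$, belongs to $\phi(H)$, then $\sum_{j\in B_i}\beta_j=0$ for all $i=1,\ldots,n$.
   Context: Notation: $x^y=yxy^{-1}$, $[x,y]=xyx^{-1}y^{-1}$. For groups $A,B$, the wreath product $A\,\mathrm{Wr}\,B$ is the semidirect product $A^B\rtimes B$, where $A^B$ is the group of all functions $B\to A$ with pointwise multiplication and $B$ acts by $(bf)(x)=f(xb)$, written $f^b=bfb^{-1}$. $H$ is a group generated by a countable set $\{a^{(1)},a^{(2)},\ldots\}$. Let $Z=\langle z\rangle$ be infinite cyclic and $b^{(i)}\in H^Z$ with $b^{(i)}(z^k)=a^{(i)}$ if $k>0$ and $1$ otherwise; $K=\langle z,b^{(i)}\ (i\in\mathbb{N})\rangle\le H\,\mathrm{Wr}\,Z$. Let $\langle s\rangle$ be infinite cyclic and $c\in K^{\langle s\rangle}$ with $c(s)=z$, $c(s^{2^i})=b^{(i)}$ for $i>0$, $c(s^k)=1$ otherwise; $G=\langle c,s\rangle\le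 K\,\mathrm{Wr}\,\langle s\rangle$. The map $\phi:H\to G$, $a^{(i)}\mapsto[c,c^{s^{2^i-1}}]$, is an injective homomorphism. *)

(* Defs.v *)
From Stdlib Require Import ZArith List FunctionalExtensionality.
Open Scope Z_scope.

Record Grp := {
  car :> Type;
  gmul : car -> car -> car;
  ginv : car -> car;
  gone : car;
  gmulA : forall x y z, gmul x (gmul y z) = gmul (gmul x y) z;
  gmul1l : forall x, gmul gone x = x;
  gmul1r : forall x, gmul x gone = x;
  gmulVl : forall x, gmul (ginv x) x = gone;
  gmulVr : forall x, gmul x (ginv x) = gone
}.
Arguments gmul {g}.
Arguments ginv {g}.
Arguments gone {g}.

Definition gpow {A : Grp} (x : A) (n : Z) : A :=
  match n with
  | Z0 => gone
  | Zpos p => Nat.iter (Pos.to_nat p) (fun y => gmul y x) gone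
  | Zneg p => Nat.iter (Pos.to_nat p) (fun y => gmul y (ginv x)) gone
  end.

Definition gconj {A : Grp} (x y : A) : A := gmul (gmul y x) (ginv y).
Definition gcomm {A : Grp} (x y : A) : A :=
  gmul (gmul (gmul x y) (ginv x)) (ginv y).

Inductive gen {A : Grp} (S : A -> Prop) : A -> Prop :=
  | gen_in : forall x, S x -> gen S x
  | gen_one : gen S gone
  | gen_mul : forall x y, gen S x -> gen S y -> gen S (gmul x y)
  | gen_inv : forall x, gen S x -> gen S (ginv x).

Definition is_hom {A B : Grp} (f : A -> B) : Prop :=
  forall x y, f (gmul x y) = gmul (f x) (f y).

(* Unrestricted wreath product A Wr C with C infinite cyclic, C = <t> identified
   with Z via t^k <-> k.  An element (f, k) stands for f * t^k with f : C -> A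
   (all functions), and C acts by (t^k f)(x) = f(x + k), f^(t^k) = t^k f t^-k. *)
Section Wreath.
Variable A : Grp.

Definition wr_car : Type := ((Z -> A) * Z)%type.
Definition wr_mul (u v : wr_car) : wr_car :=
  (fun x => gmul (fst u x) (fst v (x + snd u)), snd u + snd v).
Definition wr_inv (u : wr_car) : wr_car :=
  (fun x => ginv (fst u (x - snd u)), - snd u).
Definition wr_one : wr_car := (fun _ => gone, 0).

Lemma wr_mulA u v w : wr_mul u (wr_mul v w) = wr_mul (wr_mul u v) w.
Proof.
  destruct u as [f a], v as [g b], w as [h c]; unfold wr_mul; simpl.
  f_equal; [|ring]. apply functional_extensionality; intro x.
  rewrite gmulA, Z.add_assoc; reflexivity.
Qed.
Lemma wr_mul1l u : wr_mul wr_one u = u.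
Proof.
  destruct u as [f a]; unfold wr_mul; simpl; f_equal.
  apply functional_extensionality; intro x; rewrite gmul1l, Z.add_0_r; reflexivity.
Qed.
Lemma wr_mul1r u : wr_mul u wr_one = u.
Proof.
  destruct u as [f a]; unfold wr_mul; simpl; f_equal; [|ring].
  apply functional_extensionality; intro x; apply gmul1r.
Qed.
Lemma wr_mulVl u : wr_mul (wr_inv u) u = wr_one.
Proof.
  destruct u as [f a]; unfold wr_mul, wr_inv, wr_one; simpl; f_equal; [|ring].
  apply functional_extensionality; intro x.
  replace (x + - a) with (x - a) by ring. replace (x - a - - a) with x by ring.
  apply gmulVl.
Qed.
Lemma wr_mulVr u : wr_mul u (wr_inv u) = wr_one.
Proof.
  destruct u as [f a]; unfold wr_mul, wr_inv, wr_one; simpl; f_equal; [|ring].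
  apply functional_extensionality; intro x.
  replace (x + a - a) with x by ring. apply gmulVr.
Qed.

Definition Wr : Grp :=
  {| car := wr_car; gmul := wr_mul; ginv := wr_inv; gone := wr_one;
     gmulA := wr_mulA; gmul1l := wr_mul1l; gmul1r := wr_mul1r;
     gmulVl := wr_mulVl; gmulVr := wr_mulVr |}.

Definition wr_gen : Wr := (fun _ => gone, 1).
Definition wr_base (f : Z -> A) : Wr := (f, 0).
End Wreath.

Section Construction.
Variable H : Grp.
Variable a : nat -> H.  (* a i = a^(i); only i >= 1 is used *)

Definition HWrZ : Grp := Wr H.
Definition zz : HWrZ := wr_gen H.
Definition bb (i : nat) : HWrZ := wr_base H (fun k => if 0 <? k then a i else gone).

(* K = <z, b^(i)> <= H Wr Z; K Wr <s> is realised inside (H Wr Z) Wr <s>. *)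
Definition KWrS : Grp := Wr HWrZ.
Definition ss : KWrS := wr_gen HWrZ.
(* c(s) = z, c(s^(2^i)) = b^(i) for i > 0, c(s^k) = 1 otherwise *)
Definition cfun (k : Z) : HWrZ :=
  if k =? 1 then zz
  else if andb (1 <? k) (k =? 2 ^ Z.log2 k) then bb (Z.to_nat (Z.log2 k))
  else gone.
Definition cc : KWrS := wr_base HWrZ cfun.

Fixpoint word_tail (al be : nat -> Z) (n : nat) : KWrS :=
  match n with
  | O => gone
  | S m => gmul (word_tail al be m) (gmul (gpow cc (be (S m))) (gpow ss (al (S m))))
  end.
Definition word (al be : nat -> Z) (n : nat) : KWrS :=
  gmul (gpow ss (al O)) (word_tail al be n).
End Construction.

Definition gamma (al : nat -> Z) (j : nat) : Z :=
  fold_right Z.add 0 (map al (seq 0 j)).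

Definition block_sum (al be : nat -> Z) (n i : nat) : Z :=
  fold_right Z.add 0
    (map be (filter (fun j => gamma al j =? gamma al i) (seq 1 n))).

(* Main.v *)
Require Import Defs.
From Stdlib Require Import ZArith List Lia.
Open Scope Z_scope.

Section Aux.
Variable H : Grp.
Variable a : nat -> H.

Definition pi (u : KWrS H) (x : Z) : Z := snd (fst u x).

Lemma snd_mul (u v : KWrS H) : snd (gmul u v) = snd u + snd v.
Proof. reflexivity. Qed.
Lemma pi_mul (u v : KWrS H) x : pi (gmul u v) x = pi u x + pi v (x + snd u).
Proof. reflexivity. Qed.
Lemma snd_inv (u : KWrS H) : snd (ginv u) = - snd u.
Proof. reflexivity. Qed.
Lemma pi_inv (u : KWrS H) x : pi (ginv u) x = - pi u (x - snd u).
Proof. reflexivity. Qed.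
Lemma snd_one : snd (gone : KWrS H) = 0.
Proof. reflexivity. Qed.
Lemma pi_one x : pi (gone : KWrS H) x = 0.
Proof. reflexivity. Qed.

Lemma iter_props (u : KWrS H) (m : nat) :
  snd u = 0 ->
  snd (Nat.iter m (fun y => gmul y u) gone) = 0 /\
  forall x, pi (Nat.iter m (fun y => gmul y u) gone) x = Z.of_nat m * pi u x.
Proof.
  intros Hu; induction m as [|m [IH1 IH2]]; [|rewrite Nat.iter_succ].
  - split; [reflexivity|]. intros; reflexivity.
  - split.
    + rewrite snd_mul, IH1, Hu; reflexivity.
    + intros x. rewrite pi_mul, IH2, IH1, Z.add_0_r. lia.
Qed.

Lemma gpow_snd0 (u : KWrS H) (n : Z) :
  snd u = 0 -> snd (gpow u n) = 0 /\ forall x, pi (gpow u n) x = n * pi u x.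
Proof.
  intros Hu. destruct n as [|p|p]; unfold gpow.
  - split; [reflexivity|]; intros; reflexivity.
  - destruct (iter_props u (Pos.to_nat p) Hu) as [A B]. split; auto.
    intros x; rewrite B, positive_nat_Z; reflexivity.
  - assert (Hv : snd (ginv u) = 0) by (rewrite snd_inv, Hu; reflexivity).
    destruct (iter_props (ginv u) (Pos.to_nat p) Hv) as [A B]. split; auto.
    intros x; rewrite B, positive_nat_Z, pi_inv, Hu, Z.sub_0_r. change (Z.neg p) with (- Z.pos p); ring.
Qed.

Lemma iter_props2 (u : KWrS H) (m : nat) :
  (forall x, pi u x = 0) ->
  snd (Nat.iter m (fun y => gmul y u) gone) = Z.of_nat m * snd u /\
  forall x, pi (Nat.iter m (fun y => gmul y u) gone) x = 0.
Proof.
  intros Hu; induction m as [|m [IH1 IH2]]; [|rewrite Nat.iter_succ].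
  - split; [reflexivity|]. intros; reflexivity.
  - split.
    + rewrite snd_mul, IH1. lia.
    + intros x. rewrite pi_mul, IH2, Hu. reflexivity.
Qed.

Lemma gpow_pi0 (u : KWrS H) (n : Z) :
  (forall x, pi u x = 0) -> snd (gpow u n) = n * snd u /\ forall x, pi (gpow u n) x = 0.
Proof.
  intros Hu. destruct n as [|p|p]; unfold gpow.
  - split; [reflexivity|]; intros; reflexivity.
  - destruct (iter_props2 u (Pos.to_nat p) Hu) as [A B]. split; auto.
    rewrite A, positive_nat_Z; reflexivity.
  - assert (Hv : forall x, pi (ginv u) x = 0) by (intros x; rewrite pi_inv, Hu; reflexivity).
    destruct (iter_props2 (ginv u) (Pos.to_nat p) Hv) as [A B]. split; auto.
    rewrite A, positive_nat_Z, snd_inv. change (Z.neg p) with (- Z.pos p); ring.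
Qed.

Lemma ss_snd : snd (ss H) = 1. Proof. reflexivity. Qed.
Lemma ss_pi x : pi (ss H) x = 0. Proof. reflexivity. Qed.
Lemma cc_snd : snd (cc H a) = 0. Proof. reflexivity. Qed.
Lemma cc_pi x : pi (cc H a) x = if x =? 1 then 1 else 0.
Proof.
  unfold pi, cc, wr_base, cfun; simpl.
  destruct (x =? 1); [reflexivity|].
  destruct ((1 <? x) && (x =? 2 ^ Z.log2 x))%bool; reflexivity.
Qed.

Definition P (u : KWrS H) := snd u = 0 /\ forall x, pi u x = 0.

Lemma P_comm (u v : KWrS H) : snd u = 0 -> snd v = 0 -> P (gcomm u v).
Proof.
  intros Hu Hv. unfold gcomm, P.
  rewrite ?snd_mul, ?snd_inv, ?snd_mul, Hu, Hv. split; [reflexivity|].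
  intros x. rewrite ?pi_mul, ?snd_mul, ?snd_inv, ?snd_mul, ?pi_inv, ?snd_mul, Hu, Hv.
  rewrite ?Z.add_0_r, ?Z.sub_0_r. simpl. rewrite ?Z.add_0_r. lia.
Qed.

Definition zsum (l : list Z) := fold_right Z.add 0 l.
Lemma zsum_app l1 l2 : zsum (l1 ++ l2) = zsum l1 + zsum l2.
Proof. induction l1; simpl; [reflexivity|]. unfold zsum in *; simpl; rewrite IHl1; lia. Qed.

Lemma gamma_S al m : gamma al (S m) = gamma al m + al m.
Proof.
  unfold gamma. rewrite seq_S, map_app. change (zsum (map al (seq 0 m) ++ map al ((0+m)%nat :: nil)) = zsum (map al (seq 0 m)) + al m).
  rewrite zsum_app. simpl. lia.
Qed.

Lemma word_props al be m :
  snd (word H a al be m) = gamma al (S m) /\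
  forall x, pi (word H a al be m) x =
    zsum (map (fun j => be j * (if x + gamma al j =? 1 then 1 else 0)) (seq 1 m)).
Proof.
  induction m as [|m [IH1 IH2]].
  - unfold word; cbn [word_tail]. destruct (gpow_pi0 (ss H) (al O) ss_pi) as [A B].
    rewrite snd_mul.
    split.
    + rewrite A, ss_snd, snd_one. unfold gamma; simpl. lia.
    + intros x; rewrite pi_mul, B, pi_one. reflexivity.
  - assert (E : word H a al be (S m) =
       gmul (word H a al be m) (gmul (gpow (cc H a) (be (S m))) (gpow (ss H) (al (S m))))).
    { unfold word; cbn [word_tail]. apply gmulA. }
    rewrite E. destruct (gpow_pi0 (ss H) (al (S m)) ss_pi) as [A B].
    destruct (gpow_snd0 (cc H a) (be (S m)) cc_snd) as [C D].
    split.
    + rewrite !snd_mul, IH1, A, C, ss_snd, (gamma_S al (S m)). lia.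
    + intros x. rewrite !pi_mul, IH2, B, D, cc_pi, IH1.
      rewrite seq_S, map_app, zsum_app. simpl. rewrite Z.add_0_r.
      replace (1 + m)%nat with (S m) by lia. reflexivity.
Qed.

Lemma block_eq al be l i :
  zsum (map be (filter (fun j => gamma al j =? gamma al i) l)) =
  zsum (map (fun j => be j * (if (1 - gamma al i) + gamma al j =? 1 then 1 else 0)) l).
Proof.
  induction l as [|j l IH]; [reflexivity|].
  unfold zsum in *; cbn [map filter fold_right].
  destruct (Z.eqb_spec (gamma al j) (gamma al i)) as [e|e];
  destruct (Z.eqb_spec (1 - gamma al i + gamma al j) 1) as [f|f]; try lia;
  cbn [map filter fold_right]; rewrite IH; lia.
Qed.

End Aux.

Theorem lemma5 (H : Grp) (a : nat -> H)
  (Hgen : forall h : H, gen (fun x => exists i : nat, (1 <= i)%nat /\ x = a i) h)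
  (phi : H -> KWrS H)
  (phi_hom : is_hom phi)
  (phi_a : forall i : nat, (1 <= i)%nat ->
     phi (a i) = gcomm (cc H a) (gconj (cc H a) (gpow (ss H) (2 ^ Z.of_nat i - 1))))
  (n : nat) (al be : nat -> Z)
  (hn : (1 <= n)%nat)
  (hal : forall i : nat, (1 <= i <= n - 1)%nat -> al i <> 0)
  (hbe : forall j : nat, (1 <= j <= n)%nat -> be j <> 0)
  (hw : exists h : H, phi h = word H a al be n) :
  forall i : nat, (1 <= i <= n)%nat -> block_sum al be n i = 0.
Proof.
  intros i _.
  assert (P1 : P H (phi gone)).
  { pose proof (phi_hom gone gone) as E. rewrite gmul1l in E.
    assert (S0 : snd (phi gone) = 0).
    { pose proof (f_equal (@snd _ _) E) as E2. rewrite snd_mul in E2. lia. }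
    split; [exact S0|].
    intros x. pose proof (f_equal (fun u => pi H u x) E) as E2. cbv beta in E2.
    rewrite pi_mul, S0, Z.add_0_r in E2. lia. }
  assert (HP : forall h, P H (phi h)).
  { intros h. induction (Hgen h) as [x [k [hk ->]]| |x y _ [A1 A2] _ [B1 B2]|x _ [A1 A2]].
    - rewrite phi_a by exact hk. apply P_comm; [reflexivity|].
      unfold gconj. rewrite snd_mul, snd_inv, snd_mul, cc_snd. lia.
    - exact P1.
    - rewrite phi_hom. split.
      + rewrite snd_mul, A1, B1. reflexivity.
      + intros z. rewrite pi_mul, A2, B2. reflexivity.
    - pose proof (phi_hom (ginv x) x) as E. rewrite gmulVl in E.
      destruct P1 as [C1 C2]. rewrite E in C1, C2.
      rewrite snd_mul, A1 in C1. split; [lia|].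
      intros z. specialize (C2 z). rewrite pi_mul, A2 in C2. lia. }
  destruct hw as [h Hh]. destruct (HP h) as [_ Hpi]. rewrite Hh in Hpi.
  destruct (word_props H a al be n) as [_ W].
  specialize (Hpi (1 - gamma al i)). rewrite W in Hpi.
  unfold block_sum. change (zsum (map be (filter (fun j => gamma al j =? gamma al i) (seq 1 n))) = 0).
  rewrite block_eq. exact Hpi.
Qed.
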